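(* Fix $N\ge1$. For any $T\ge1$, any $\varkappa\in\mathbb{P}'_T$ with $\varkappa_T>N$, and any $M\ge N$, $$\mathscr{D}_N\widetilde{\mathsf{F}}^{(M)}_\varkappa(u_1,\ldots,u_T\mid\mathbf{a},\boldsymbol\nu)=q^T(1-\nu_1\cdots\nu_N)\,\widetilde{\mathsf{F}}^{(M)}_\varkappa(u_1,\ldots,u_T\mid\mathbf{a},\boldsymbol\nu).$$ Moreover, for any $\ell\ge1$ and $N_1\ge\ldots\ge N_\ell\ge1$ with $N_1\le N$, $$\mathscr{D}_{N_\ell}\cdots\mathscr{D}_{N_1}\widetilde{\mathsf{F}}^{(M)}_\varkappa(u_1,\ldots,u_T\mid\mathbf{a},\boldsymbol\nu)=q^{\ell T}\,\widetilde{\mathsf{F}}^{(M)}_\varkappa(u_1,\ldots,u_T\mid\mathbf{a},\boldsymbol\nu)\cdot\bigl(\mathscr{D}_{N_\ell}\cdots\mathscr{D}_{N_1}1\bigr).$$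
   Context: Fix $q\in(0,1)$; $(z;q)_k=\prod_{i=0}^{k-1}(1-zq^i)$. Parameters: $u_1,u_2,\ldots\in(-\infty,0)$, $a_1,a_2,\ldots\in(0,\infty)$, $\nu_1,\nu_2,\ldots\in(0,1)$ with $a_i,\nu_i$ uniformly bounded away from the endpoints of their intervals, and with $a_i\mathsf{c}_j<1$ for all $i,j$, where $\mathsf{c}_j:=\nu_j/a_j$. $\mathbb{P}'_T$ is the set of integer partitions $\varkappa=(\varkappa_1\ge\ldots\ge\varkappa_T\ge1)$ with exactly $T$ positive parts; write $k_r:=\#\{i:\varkappa_i=r\}$. Define $$\mathsf{F}^{\mathrm{stoch}}_\varkappa(u_1,\ldots,u_T\mid\mathbf{a},\boldsymbol\nu):=\prod_{r\ge1}\frac{(\nu_r;q)_{k_r}}{(q;q)_{k_r}}\sum_{\sigma\in S_T}\sigma\Bigl(\prod_{1\le\alpha<\beta\le T}\frac{u_\alpha-qu_\beta}{u_\alpha-u_\beta}\prod_{i=1}^T\frac{1-q}{1-a_{\varkappa_i}u_i}\prod_{j=1}^{\varkappa_i-1}\frac{\nu_j-a_ju_i}{1-a_ju_i}\Bigr),$$ where $\sigma$ acts by permuting the variables $u_1,\ldots,u_T$ (not the $\varkappa_i$). Set $\Phi_M(u_1,\ldots,u_T):=\prod_{i=1}^T\prod_{j=1}^M(1-a_ju_i)$ and $\widetilde{\mathsf{F}}^{(M)}_\varkappa:=\Phi_M\,\mathsf{F}^{\mathrm{stoch}}_\varkappa$. $\mathscr{T}_{q;x}$ is the $q$-shift $x\mapsto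 qx$ in the variable $x$, and the operator $\mathscr{D}_N$ acts on functions of the $a_i$'s and $\nu_i$'s by $\mathscr{D}_N=\sum_{r=1}^N(1-\nu_r)\bigl(\prod_{1\le i\le N,\,i\ne r}\frac{a_i-\nu_ia_r}{a_i-a_r}\bigr)\mathscr{T}_{q;a_r}\mathscr{T}_{q;\nu_r}$; products of operators mean composition (rightmost first). *)

(* Defs.v *)
(* All sequences (u_i), (a_i), (nu_i), (kappa_i) are
   1-indexed functions on nat; index 0 is unused. *)
From HB Require Import structures.
From mathcomp Require Import all_boot all_order all_algebra all_fingroup.
Set Implicit Arguments.
Unset Strict Implicit.
Unset Printing Implicit Defensive.
Import Order.TTheory GRing.Theory Num.Theory.
Local Open Scope ring_scope.

Section Defs.
Variable R : realFieldType.
Variable q : R.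

Definition qpoch (z : R) (k : nat) : R := \prod_(i < k) (1 - z * q ^+ i).

Definition partitionT (T : nat) (kappa : nat -> nat) : Prop :=
  (forall i, (1 <= i)%N -> (i < T)%N -> (kappa i.+1 <= kappa i)%N) /\
  (1 <= kappa T)%N.

Definition mult (T : nat) (kappa : nat -> nat) (r : nat) : nat :=
  #|[set i : 'I_T | kappa i.+1 == r]|.

Definition Fstoch (T : nat) (kappa : nat -> nat) (u : nat -> R)
    (a nu : nat -> R) : R :=
  (\prod_(1 <= r < (\max_(i < T) kappa i.+1).+1)
      (qpoch (nu r) (mult T kappa r) / qpoch q (mult T kappa r))) *
  \sum_(s : 'S_T)
    let v := fun i : 'I_T => u (s i).+1 in
    (\prod_(al < T) \prod_(be < T | (al < be)%N)
        ((v al - q * v be) / (v al - v be))) *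
    \prod_(i < T)
      ((1 - q) / (1 - a (kappa i.+1) * v i) *
       \prod_(1 <= j < kappa i.+1) ((nu j - a j * v i) / (1 - a j * v i))).

Definition PhiM (M T : nat) (u a : nat -> R) : R :=
  \prod_(1 <= i < T.+1) \prod_(1 <= j < M.+1) (1 - a j * u i).

Definition Ftilde (M T : nat) (kappa : nat -> nat) (u : nat -> R)
    : (nat -> R) -> (nat -> R) -> R :=
  fun a nu => PhiM M T u a * Fstoch T kappa u a nu.

Definition qshift (r : nat) (a : nat -> R) : nat -> R :=
  fun i => if i == r then q * a i else a i.

Definition Dop (N : nat) (f : (nat -> R) -> (nat -> R) -> R)
    : (nat -> R) -> (nat -> R) -> R :=
  fun a nu =>
    \sum_(1 <= r < N.+1)
      (1 - nu r) *
      (\prod_(1 <= i < N.+1 | i != r) ((a i - nu i * a r) / (a i - a r))) *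
      f (qshift r a) (qshift r nu).

(* D_{N_l} ... D_{N_1} f  for Ns = [:: N_1; ...; N_l] (rightmost first) *)
Definition Diter (Ns : seq nat) (f : (nat -> R) -> (nat -> R) -> R)
    : (nat -> R) -> (nat -> R) -> R :=
  foldl (fun g n => Dop n g) f Ns.

End Defs.

(* Main.v *)
Set Warnings "-notation-overridden,-ambiguous-paths,-deprecated".
Require Import Defs.
From HB Require Import structures.
From mathcomp Require Import all_boot all_order all_algebra all_fingroup.
From mathcomp Require Import ring lra zify.
Import Order.TTheory GRing.Theory Num.Theory.
Local Open Scope ring_scope.

Section Aux.
Variable R : realFieldType.

Lemma prod_change m n r (F G : nat -> R) t :
  (m <= r < n)%N -> (forall j, j != r -> G j = F j) -> G r = F r * t ->
  \prod_(m <= j < n) G j = (\prod_(m <= j < n) F j) * t.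
Proof.
move=> hr hG hGr.
have hin : r \in index_iota m n by rewrite mem_index_iota.
rewrite (bigD1_seq r) ?iota_uniq // [in RHS](bigD1_seq r) ?iota_uniq //.
rewrite hGr (eq_bigr F); last by move=> j /hG.
by rewrite mulrAC.
Qed.

Definition cc N (a nu : nat -> R) r :=
  \prod_(1 <= i < N.+1 | i != r) ((a i - nu i * a r) / (a i - a r)).

Lemma cc_rec N a nu r : (r <= N)%N ->
  cc N.+1 a nu r = cc N a nu r * ((a N.+1 - nu N.+1 * a r) / (a N.+1 - a r)).
Proof.
move=> hr; rewrite /cc big_mkcond big_nat_recr //= [in RHS]big_mkcond.
by rewrite ifT // neq_ltn ltnS hr orbT.
Qed.

Lemma cc_last N a nu : cc N.+1 a nu N.+1 =
  \prod_(1 <= i < N.+1) ((a i - nu i * a N.+1) / (a i - a N.+1)).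
Proof.
rewrite /cc big_mkcond big_nat_recr //= eqxx mulr1.
apply: eq_big_nat => i /andP[_ hi]; by rewrite ifT // neq_ltn hi.
Qed.

Lemma pf_identity N (a nu : nat -> R) :
  (forall i j, (1 <= i <= N)%N -> (1 <= j <= N)%N -> i <> j -> a i <> a j) ->
  forall z, (forall i, (1 <= i <= N)%N -> z <> a i) ->
  \prod_(1 <= i < N.+1) ((a i - nu i * z) / (a i - z)) =
  \prod_(1 <= i < N.+1) nu i +
  \sum_(1 <= r < N.+1) ((1 - nu r) * a r * cc N a nu r / (a r - z)).
Proof.
elim: N => [|N IH] hd z hz.
  by rewrite !big_geq // addr0.
have hd' : forall i j, (1 <= i <= N)%N -> (1 <= j <= N)%N -> i <> j -> a i <> a j.
  move=> i j /andP[hi1 hi2] /andP[hj1 hj2]; apply: hd; apply/andP; split=> //; lia.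
have hz' : forall i, (1 <= i <= N)%N -> z <> a i.
  move=> i /andP[hi1 hi2]; apply: hz; apply/andP; split=> //; lia.
set b := a N.+1; set m := nu N.+1.
have hbz : b - z != 0 by rewrite subr_eq0; apply/eqP => h; apply: (hz N.+1 _ (esym h)); rewrite leqnn.
have hb : forall i, (1 <= i <= N)%N -> b <> a i.
  move=> i /andP[hi1 hi2] h; apply: (hd N.+1 i _ _ _ h)=> //; try (apply/andP; split); lia.
rewrite big_nat_recr // (IH hd' z hz').
rewrite [\prod_(1 <= i < N.+2) nu i]big_nat_recr // [\sum_(1 <= r < N.+2) _]big_nat_recr //=.
rewrite cc_last (IH hd' b hb).
have e1 : \sum_(1 <= i < N.+1) (1 - nu i) * a i * cc N.+1 a nu i / (a i - z) =
  \sum_(1 <= r < N.+1) ((1 - nu r) * a r * cc N a nu r / (a r - z)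
   * ((b - m * a r) / (b - a r))).
  apply: eq_big_nat => r /andP[hr1 hr2]; rewrite cc_rec; last by lia.
  rewrite -/b -/m; ring.
rewrite e1 -/b -/m.
have key : (\sum_(1 <= r < N.+1) ((1 - nu r) * a r * cc N a nu r / (a r - z))) *
    ((b - m * z) / (b - z)) =
  \sum_(1 <= r < N.+1) ((1 - nu r) * a r * cc N a nu r / (a r - z)
   * ((b - m * a r) / (b - a r))) +
  (1 - m) * b / (b - z) * \sum_(1 <= r < N.+1) ((1 - nu r) * a r * cc N a nu r / (a r - b)).
  rewrite mulr_suml mulr_sumr -big_split /=; apply: eq_big_nat => r /andP[hr1 hr2].
  have har : a r - z != 0.
    by rewrite subr_eq0; apply/eqP=> h; apply: (hz' r); [apply/andP; split; lia | rewrite h].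
  have hbr : b - a r != 0.
    by rewrite subr_eq0; apply/eqP; apply: hb; apply/andP; split; lia.
  have hrb : a r - b != 0 by rewrite -opprB oppr_eq0.
  by field; rewrite hbz har hbr hrb.
rewrite mulrDl key.
move: (\sum_(1 <= r < N.+1) _ ) => S1.
move: (\sum_(1 <= r < N.+1) ((1 - nu r) * a r * cc N a nu r / (a r - b))) => S2.
field; exact: hbz.
Qed.

Lemma Diter_hom (q c : R) (N : nat) (P : (nat -> R) -> (nat -> R) -> Prop)
  (f : (nat -> R) -> (nat -> R) -> R) :
  (forall r a nu, (1 <= r <= N)%N -> P a nu -> P (qshift q r a) (qshift q r nu)) ->
  (forall r a nu, (1 <= r <= N)%N -> P a nu ->
     f (qshift q r a) (qshift q r nu) = c * f a nu) ->
  forall Ns, all (fun n => n <= N)%N Ns -> forall a nu, P a nu ->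
  Diter q Ns f a nu = c ^+ size Ns * f a nu * Diter q Ns (fun _ _ => 1) a nu.
Proof.
move=> hP hf; elim/last_ind => [|Ns n IH].
  by move=> _ a nu _; rewrite /= expr0 mul1r mulr1.
rewrite all_rcons => /andP[hn hall] a nu Pa.
rewrite /Diter !foldl_rcons -!/(Diter q Ns _) /Dop size_rcons exprS.
rewrite mulr_sumr; apply: eq_big_nat => r /andP[hr1 hr2].
have hrN : (1 <= r <= N)%N by apply/andP; split=> //; lia.
rewrite IH // ?hf //; last exact: hP.
ring.
Qed.

Lemma sorted_le_head (Ns : seq nat) : sorted geq Ns -> all (fun n => n <= head 0 Ns)%N Ns.
Proof.
case: Ns => [|x s] //= hs; rewrite leqnn /=.
have := order_path_min _ hs; apply.
by move=> y x' z h1 h2; exact: leq_trans h2 h1.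
Qed.

Lemma kappa_big T kappa N : partitionT T kappa -> (N < kappa T)%N ->
  forall i, (i < T)%N -> (N < kappa i.+1)%N.
Proof.
case=> hmono _ hNT.
have H : forall d, (d < T)%N -> (kappa T <= kappa (T - d))%N.
  elim=> [|d IH] hd; first by rewrite subn0.
  apply: leq_trans (IH (ltnW hd)) _.
  have -> : (T - d = (T - d.+1).+1)%N by lia.
  apply: hmono; lia.
move=> i hi; apply: leq_trans hNT _.
have := H (T - i.+1)%N; have -> : (T - (T - i.+1) = i.+1)%N by lia.
apply; lia.
Qed.

Lemma mult0 T kappa N r : (forall i, (i < T)%N -> (N < kappa i.+1)%N) ->
  (r <= N)%N -> mult T kappa r = 0%N.
Proof.
move=> hk hr; apply/eqP; rewrite cards_eq0; apply/eqP/setP => i.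
rewrite !inE; apply/negbTE; rewrite neq_ltn; apply/orP; right.
exact: leq_ltn_trans hr (hk _ (ltn_ord i)).
Qed.

Lemma Ftilde_shift (q : R) (u a nu : nat -> R) M T kappa N r :
  0 < q -> (forall i, (1 <= i)%N -> u i < 0) -> 0 < a r ->
  (forall i, (i < T)%N -> (N < kappa i.+1)%N) -> (1 <= r <= N)%N -> (N <= M)%N ->
  Ftilde q M T kappa u (qshift q r a) (qshift q r nu) =
  q ^+ T * Ftilde q M T kappa u a nu.
Proof.
move=> hq hu har hk /andP[hr1 hrN] hNM.
set a' := qshift q r a; set nu' := qshift q r nu.
have ha'r : a' r = q * a r by rewrite /a' /qshift eqxx.
have hnu'r : nu' r = q * nu r by rewrite /nu' /qshift eqxx.
have ha'j : forall j, j != r -> a' j = a j by move=> j hj; rewrite /a' /qshift (negbTE hj).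
have hnu'j : forall j, j != r -> nu' j = nu j by move=> j hj; rewrite /nu' /qshift (negbTE hj).
have hqa : 0 < q * a r by rewrite mulr_gt0.
have hnz : forall x, x < 0 -> 1 - a r * x != 0 /\ 1 - q * a r * x != 0.
  move=> x hx; split; rewrite lt0r_neq0 // subr_gt0.
    by apply: (lt_trans (y := 0)) => //; rewrite pmulr_rlt0.
  by apply: (lt_trans (y := 0)) => //; rewrite pmulr_rlt0.
pose w x := (1 - q * a r * x) / (1 - a r * x).
pose h x := (1 - a r * x) / (1 - q * a r * x).
have ePhi : PhiM M T u a' = PhiM M T u a * \prod_(i < T) w (u i.+1).
  rewrite /PhiM !big_add1 /= !big_mkord -big_split /=; apply: eq_bigr => i _.
  have [n1 n2] := hnz _ (hu i.+1 isT).
  apply: (@prod_change _ _ r).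
  - by apply/andP; split=> //; lia.
  - by move=> j hj; rewrite ha'j.
  - by rewrite ha'r /w; field.
have eWH : \prod_(i < T) w (u i.+1) * \prod_(i < T) h (u i.+1) = 1.
  rewrite -big_split big1 // => i _ /=.
  have [n1 n2] := hnz _ (hu i.+1 isT).
  rewrite /w /h; field; by rewrite n1 n2.
have ePre : forall K, \prod_(1 <= r' < K)
      (qpoch q (nu' r') (mult T kappa r') / qpoch q q (mult T kappa r')) =
    \prod_(1 <= r' < K)
      (qpoch q (nu r') (mult T kappa r') / qpoch q q (mult T kappa r')).
  move=> K; apply: eq_big_nat => r' _.
  have [->|hne] := eqVneq r' r; last by rewrite hnu'j.
  by rewrite (mult0 _ _ _ _ hk hrN) /qpoch !big_ord0.
rewrite /Ftilde /Fstoch ePhi ePre.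
have eS : forall s : 'S_T,
  \prod_(i < T)
     ((1 - q) / (1 - a' (kappa i.+1) * u (s i).+1) *
      \prod_(1 <= j < kappa i.+1)
         ((nu' j - a' j * u (s i).+1) / (1 - a' j * u (s i).+1))) =
  \prod_(i < T)
     ((1 - q) / (1 - a (kappa i.+1) * u (s i).+1) *
      \prod_(1 <= j < kappa i.+1)
         ((nu j - a j * u (s i).+1) / (1 - a j * u (s i).+1))) *
  (q ^+ T * \prod_(i < T) h (u i.+1)).
  move=> s.
  rewrite [\prod_(i < T) h _](reindex_inj (@perm_inj _ s)) /=.
  have -> : q ^+ T = \prod_(i < T) q by rewrite prodr_const card_ord.
  rewrite -big_split -big_split /=.
  apply: eq_bigr => i _.
  have [n1 n2] := hnz _ (hu (s i).+1 isT).
  have hki : kappa i.+1 != r.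
    by rewrite neq_ltn; apply/orP; right; apply: leq_ltn_trans hrN (hk _ (ltn_ord i)).
  rewrite ha'j // -[RHS]mulrA; congr (_ * _).
  apply: (@prod_change _ _ r).
  - by apply/andP; split=> //; apply: leq_ltn_trans hrN (hk _ (ltn_ord i)).
  - by move=> j hj; rewrite ha'j // hnu'j.
  - by rewrite ha'r hnu'r /h; field; rewrite n1 n2.
under [\sum_(s : 'S_T) _]eq_bigr => s _ do rewrite eS mulrA.
rewrite -mulr_suml.
have -> : forall A B C D E F : R, A * B * (C * (D * (E * F))) = E * (A * (C * D)) * (B * F).
  by move=> *; ring.
by rewrite eWH mulr1.
Qed.
End Aux.

Theorem lemma4p5 (R : realFieldType) (q : R) (u a nu : nat -> R)
  (hq : 0 < q < 1)
  (hu : forall i, (1 <= i)%N -> u i < 0)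
  (ha : forall i, (1 <= i)%N -> 0 < a i)
  (hnu : forall i, (1 <= i)%N -> 0 < nu i < 1)
  (hbdd : exists eps : R, 0 < eps /\
     forall i, (1 <= i)%N ->
       eps <= a i <= eps^-1 /\ eps <= nu i <= 1 - eps)
  (hac : forall i j, (1 <= i)%N -> (1 <= j)%N -> a i * (nu j / a j) < 1)
  (N : nat) (hN : (1 <= N)%N)
  (hdist : forall i j, (1 <= i <= N)%N -> (1 <= j <= N)%N -> i <> j ->
     a i <> a j)
  (T : nat) (hT : (1 <= T)%N) (kappa : nat -> nat)
  (hkappa : partitionT T kappa) (hkN : (N < kappa T)%N)
  (M : nat) (hM : (N <= M)%N) :
  Dop q N (Ftilde q M T kappa u) a nu
    = q ^+ T * (1 - \prod_(1 <= r < N.+1) nu r) * Ftilde q M T kappa u a nu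
  /\
  forall Ns : seq nat,
    (1 <= size Ns)%N ->
    sorted geq Ns ->
    all (fun n => 1 <= n)%N Ns ->
    (head 0 Ns <= N)%N ->
    Diter q Ns (Ftilde q M T kappa u) a nu
      = q ^+ (size Ns * T) * Ftilde q M T kappa u a nu
        * Diter q Ns (fun _ _ => 1) a nu.
Proof.
have hk := kappa_big _ _ _ hkappa hkN.
have hq0 : 0 < q by case/andP: hq.
set F := Ftilde q M T kappa u.
pose P := fun (a' nu' : nat -> R) => forall j, (1 <= j)%N -> 0 < a' j.
have hP : forall r a' nu', (1 <= r <= N)%N -> P a' nu' ->
    P (qshift q r a') (qshift q r nu').
  move=> r a' nu' _ Pa j hj; rewrite /qshift; case: eqP => _.
    by rewrite mulr_gt0 // Pa.
  exact: Pa.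
have hf : forall r a' nu', (1 <= r <= N)%N -> P a' nu' ->
    F (qshift q r a') (qshift q r nu') = q ^+ T * F a' nu'.
  move=> r a' nu' hr Pa.
  apply: (@Ftilde_shift R q u a' nu' M T kappa N r) => //.
  by apply: Pa; case/andP: hr.
have hDI := Diter_hom _ _ _ _ _ _ hP hf.
have Pa : P a nu by [].
split.
  have := hDI [:: N] _ a nu Pa; rewrite /= leqnn => /(_ isT) ->.
  rewrite expr1.
  have e1 : Dop q N (fun _ _ => 1) a nu = 1 - \prod_(1 <= r < N.+1) nu r.
    have hz : forall i, (1 <= i <= N)%N -> 0 <> a i.
      by move=> i /andP[hi _] h; move: (ha i hi); rewrite -h ltxx.
    have := pf_identity R N a nu hdist 0 hz.
    rewrite big1_seq; last first.
      move=> i /andP[_]; rewrite mem_index_iota => /andP[hi _]; have := ha i hi => hai.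
      by rewrite mulr0 !subr0 divff // gt_eqF.
    move=> e.
    have -> : 1 - \prod_(1 <= r < N.+1) nu r =
      \sum_(1 <= r < N.+1) (1 - nu r) * a r * cc R N a nu r / (a r - 0).
      by rewrite {1}e addrC addKr.
    rewrite /Dop.
    apply: eq_big_nat => r /andP[hr _].
    rewrite subr0 mulr1 /cc mulrAC mulfK //.
    by rewrite gt_eqF // ha.
  by rewrite e1 mulrAC.
move=> Ns _ hs _ hh.
rewrite hDI //; last first.
  apply/allP => n hn; apply: leq_trans hh.
  by move/allP: (sorted_le_head _ hs); apply.
by rewrite -exprM mulnC.
Qed.
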